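(* Let $K$ be a commutative ring with identity, let $A$ be a $K$-algebra with augmentation $\varepsilon:A\to K$ (a $K$-algebra epimorphism), and let $n\ge 0$. If $A$ is weak bi-$FP_n$, then $A$ is both left-$FP_n$ and right-$FP_n$.
   Context: A module is of type $FP_n$ if there is an exact sequence $0\leftarrow M\leftarrow P_0\leftarrow\cdots\leftarrow P_n$ with $P_0,\dots,P_n$ finitely generated free modules. $A$ is left-$FP_n$ (resp. right-$FP_n$) if $K$, regarded as a left (resp. right) $A$-module via $\varepsilon$, is of type $FP_n$. An $(A,A)$-bimodule is an abelian group $M$ with left and right $A$-actions satisfying $(am)b=a(mb)$ and $km=mk$ for $k\in K$; the free bimodule of rank $r$ is a direct sum of $r$ copies of $A\otimes_K A$ with action $a(u\otimes v)b=au\otimes vb$. $A$ is weak bi-$FP_n$ if $K$, regarded as an $(A,A)$-bimodule via $a\cdot k\cdot a'=\varepsilon(a)k\varepsilon(a')$, has an exact sequence $0\leftarrow K\leftarrow F_0\leftarrow\cdots\leftarrow F_n$ with $F_0,\dots,F_n$ finitely generated free $(A,A)$-bimodules. *)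

(* Defs.v *)
From mathcomp Require Import all_boot all_order all_algebra.
Set Implicit Arguments.
Unset Strict Implicit.
Unset Printing Implicit Defensive.
Import GRing.Theory.
Local Open Scope ring_scope.

Section Defs.
Variables (K : comPzRingType) (A : algType K) (eps : A -> K).

Definition augmentation : Prop :=
  [/\ (forall x y, eps (x + y) = eps x + eps y),
      (forall x y, eps (x * y) = eps x * eps y),
      eps 1 = 1,
      (forall (k : K) (x : A), eps (k *: x) = k * eps x)
    & (forall k : K, exists x : A, eps x = k)].

(* The finitely generated free left (resp. right) A-module of rank r is
   A^r = 'rV[A]_r with the entrywise left (resp. right) action.          *)
Definition lact (r : nat) (a : A) (v : 'rV[A]_r) : 'rV[A]_r := a *: v.
Definition ract (r : nat) (a : A) (v : 'rV[A]_r) : 'rV[A]_r :=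
  map_mx (fun x => x * a) v.

Section OneSided.
Variables (act : forall r : nat, A -> 'rV[A]_r -> 'rV[A]_r)
          (kact : A -> K -> K).

Definition mod_linear (r s : nat) (f : 'rV[A]_r -> 'rV[A]_s) : Prop :=
  (forall u v, f (u + v) = f u + f v) /\
  (forall a u, f (act a u) = act a (f u)).

Definition aug_linear (r : nat) (f : 'rV[A]_r -> K) : Prop :=
  (forall u v, f (u + v) = f u + f v) /\
  (forall a u, f (act a u) = kact a (f u)).

(* K (with the action kact) is of type FP_n: there is an exact sequence
   0 <- K <- P_0 <- P_1 <- ... <- P_n with P_j = A^(r j) free of finite
   rank; d j : P_(j+1) -> P_j, aug : P_0 -> K.                            *)
Definition K_FP (n : nat) : Prop :=
  exists (r : nat -> nat)
         (d : forall j : nat, 'rV[A]_(r j.+1) -> 'rV[A]_(r j))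
         (aug : 'rV[A]_(r 0%N) -> K),
  [/\ aug_linear aug,
      (forall j, (j < n)%N -> mod_linear (d j)),
      (forall k : K, exists x, aug x = k),
      ((0 < n)%N -> forall x, aug x = 0 <-> exists y, d 0%N y = x)
    & (forall j, (j.+1 < n)%N ->
         forall x, d j x = 0 <-> exists y, d j.+1 y = x)].
End OneSided.

Definition left_FP (n : nat) : Prop :=
  K_FP (fun r a v => lact a v) (fun a k => eps a * k) n.

Definition right_FP (n : nat) : Prop :=
  K_FP (fun r a v => ract a v) (fun a k => k * eps a) n.

Record bimod := Bimod {
  bcar :> zmodType;
  bl : A -> bcar -> bcar;
  br : bcar -> A -> bcar;
  _ : forall a (m m' : bcar), bl a (m + m') = bl a m + bl a m';
  _ : forall a a' (m : bcar), bl (a + a') m = bl a m + bl a' m;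
  _ : forall m : bcar, bl 1 m = m;
  _ : forall a b (m : bcar), bl (a * b) m = bl a (bl b m);
  _ : forall a (m m' : bcar), br (m + m') a = br m a + br m' a;
  _ : forall a a' (m : bcar), br m (a + a') = br m a + br m a';
  _ : forall m : bcar, br m 1 = m;
  _ : forall a b (m : bcar), br m (a * b) = br (br m a) b;
  _ : forall a b (m : bcar), br (bl a m) b = bl a (br m b);
  _ : forall (k : K) (m : bcar), bl (k%:A) m = br m (k%:A)
}.

Definition bimod_hom (M N : bimod) (f : M -> N) : Prop :=
  [/\ (forall x y, f (x + y) = f x + f y),
      (forall a x, f (bl a x) = bl a (f x))
    & (forall a x, f (br x a) = br (f x) a)].

(* F is a free (A,A)-bimodule of rank r (i.e. isomorphic to the direct sum
   of r copies of A (x)_K A), expressed by the universal property of a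
   free bimodule on a basis g : 'I_r -> F in the category of (A,A)-bimodules
   above.                                                  *)
Definition free_bimod (F : bimod) (r : nat) : Prop :=
  exists g : 'I_r -> F,
    forall (M : bimod) (m : 'I_r -> M),
      (exists f : F -> M, bimod_hom f /\ forall i, f (g i) = m i) /\
      (forall f f' : F -> M, bimod_hom f -> bimod_hom f' ->
         (forall i, f (g i) = f' (g i)) -> forall x, f x = f' x).

Definition aug_bimod_hom (F : bimod) (f : F -> K) : Prop :=
  [/\ (forall x y, f (x + y) = f x + f y),
      (forall a x, f (bl a x) = eps a * f x)
    & (forall a x, f (br x a) = f x * eps a)].

Definition weak_biFP (n : nat) : Prop :=
  exists (F : nat -> bimod) (r : nat -> nat)
         (d : forall j : nat, F j.+1 -> F j) (aug : F 0%N -> K),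
  (forall j, (j <= n)%N -> free_bimod (F j) (r j)) /\
  [/\ aug_bimod_hom aug,
      (forall j, (j < n)%N -> bimod_hom (d j)),
      (forall k : K, exists x, aug x = k),
      ((0 < n)%N -> forall x, aug x = 0 <-> exists y, d 0%N y = x)
    & (forall j, (j.+1 < n)%N ->
         forall x, d j x = 0 <-> exists y, d j.+1 y = x)].

End Defs.

(* Submission.v *)
Require Import Defs.
From mathcomp Require Import all_boot all_order all_algebra.
From Stdlib Require Import ClassicalEpsilon.

Set Implicit Arguments.
Unset Strict Implicit.
Unset Printing Implicit Defensive.
Import GRing.Theory.
Local Open Scope ring_scope.

Section AddLemmas.
Variables (U V : zmodType) (h : U -> V).
Hypothesis hD : forall x y, h (x + y) = h x + h y.
Lemma addf0 : h 0 = 0.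
Proof. by apply: (addrI (h 0)); rewrite -hD !addr0. Qed.
Lemma addfN x : h (- x) = - h x.
Proof. by apply: (addrI (h x)); rewrite -hD !subrr addf0. Qed.
Lemma addfB x y : h (x - y) = h x - h y.
Proof. by rewrite hD addfN. Qed.
Lemma addf_sum m (F : 'I_m -> U) : h (\sum_i F i) = \sum_i h (F i).
Proof. exact: (big_morph h hD addf0). Qed.
End AddLemmas.

Lemma arith3 (V : zmodType) (a b c d x y : V) :
  a + b - (c + d) - (x + y) = (a - c - x) + (b - d - y).
Proof. by rewrite (opprD c d) (addrACA a b) (opprD x y) (addrACA (a - c)). Qed.


Section Generic.
Variables (K : comPzRingType) (A : algType K) (eps : A -> K).
Variable mu : A -> A -> A.
Hypothesis hmu1 : forall x, mu x 1 = x.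
Hypothesis hmu0 : forall x, mu x 0 = 0.
Hypothesis hmuD : forall a x y, mu a (x + y) = mu a x + mu a y.

Local Notation act a v := (map_mx (mu a) v).

Lemma actD m a (u v : 'rV[A]_m) : act a (u + v) = act a u + act a v.
Proof. by apply/matrixP => i j; rewrite !mxE hmuD. Qed.
Lemma act0 m a : act a (0 : 'rV[A]_m) = 0.
Proof. by apply/matrixP => i j; rewrite !mxE hmu0. Qed.

Definition e m (i : 'I_m) : 'rV[A]_m := delta_mx 0 i.

Lemma basis_dec m (v : 'rV[A]_m) : v = \sum_i act (v 0 i) (e i).
Proof.
apply/rowP => j; rewrite summxE (bigD1 j) //= big1 ?addr0.
  by rewrite !mxE !eqxx /= hmu1.
by move=> i /negbTE ij; rewrite !mxE eqxx /= eq_sym ij hmu0.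
Qed.

Lemma lin_basis (V : zmodType) (rho : A -> V -> V) m (psi : 'rV[A]_m -> V) :
  (forall u v, psi (u + v) = psi u + psi v) ->
  (forall a v, psi (act a v) = rho a (psi v)) ->
  forall v, psi v = \sum_i rho (v 0 i) (psi (e i)).
Proof.
move=> hD hA v; rewrite {1}(basis_dec v) addf_sum //.
by apply: eq_bigr => i _; rewrite hA.
Qed.


Variable n : nat.
Variables (L : nat -> zmodType) (aL : forall j, A -> L j -> L j).
Unset Implicit Arguments.
Variables (dL : forall j, L j.+1 -> L j) (augL : L 0 -> K).
Hypothesis haLD : forall j a (x y : L j), aL a (x + y) = aL a x + aL a y.
Hypothesis haLDl : forall j a b (x : L j), aL (a + b) x = aL a x + aL b x.
Hypothesis haLmu : forall j a b (x : L j), aL (mu a b) x = aL a (aL b x).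
Hypothesis hdLD : forall j, (j < n)%N -> forall x y, dL j (x + y) = dL j x + dL j y.
Hypothesis hdLA : forall j, (j < n)%N -> forall a x, dL j (aL a x) = aL a (dL j x).
Hypothesis haugLD : forall x y, augL (x + y) = augL x + augL y.
Hypothesis haugLA : forall a x, augL (aL a x) = eps a * augL x.
Hypothesis haugLs : forall k, exists x, augL x = k.
Hypothesis hex0 : (0 < n)%N -> forall x, augL x = 0 <-> exists y, dL 0 y = x.
Hypothesis hexS : forall j, (j.+1 < n)%N -> forall x, dL j x = 0 <-> exists y, dL j.+1 y = x.

Variables (r : nat -> nat) (dQ : forall j, 'rV[A]_(r j.+1) -> 'rV[A]_(r j))
  (augQ : 'rV[A]_(r 0) -> K) (f : forall j, L j -> 'rV[A]_(r j)).
Hypothesis hdQD : forall j, (j < n)%N -> forall u v, dQ j (u + v) = dQ j u + dQ j v.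
Hypothesis hdQA : forall j, (j < n)%N -> forall a u, dQ j (act a u) = act a (dQ j u).
Hypothesis haugQD : forall u v, augQ (u + v) = augQ u + augQ v.
Hypothesis haugQA : forall a u, augQ (act a u) = eps a * augQ u.
Hypothesis hfD : forall j, (j <= n)%N -> forall x y, f j (x + y) = f j x + f j y.
Hypothesis hfA : forall j, (j <= n)%N -> forall a x, f j (aL a x) = act a (f j x).
Hypothesis hf0 : forall x, augQ (f 0 x) = augL x.
Hypothesis hfS : forall j, (j < n)%N -> forall x, dQ j (f j.+1 x) = f j (dL j x).
Hypothesis hQ0 : (0 < n)%N -> forall y, augQ (dQ 0 y) = 0.
Hypothesis hQS : forall j, (j.+1 < n)%N -> forall y, dQ j (dQ j.+1 y) = 0.

Set Implicit Arguments.
Fixpoint R k : nat := match k with 0 => r 0 | k'.+1 => (r k'.+1 + R k')%N end.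

Definition iota k : 'rV[A]_(r k) -> 'rV[A]_(R k) :=
  match k as k0 return 'rV[A]_(r k0) -> 'rV[A]_(R k0) with
  | 0 => fun a => a
  | k'.+1 => fun a => row_mx a 0
  end.

Arguments iota k _ : clear implicits.

Definition sig k (b : 'rV[A]_(R k)) : 'rV[A]_(R k.+1) := row_mx 0 b.

Definition comb j m (w : 'I_m -> L j) (v : 'rV[A]_m) : L j :=
  \sum_i aL (v 0 i) (w i).

Definition liftL j (y : L j) : L j.+1 := epsilon (inhabits 0) (fun x => dL j x = y).
Definition liftA (c : K) : L 0 := epsilon (inhabits 0) (fun x => augL x = c).

Fixpoint data k : ('rV[A]_(R k) -> L k) * ('rV[A]_(R k) -> 'rV[A]_(R k)) :=
  match k as k0 return ('rV[A]_(R k0) -> L k0) * ('rV[A]_(R k0) -> 'rV[A]_(R k0)) with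
  | 0 => let G := comb (fun i : 'I_(r 0) => liftA (augQ (e i))) in
         (G, fun b => b - f 0 (G b))
  | k'.+1 =>
      let G' := (data k').1 in let t' := (data k').2 in
      let dP' := fun x : 'rV[A]_(r k'.+1 + R k') =>
                   iota k' (dQ k' (lsubmx x)) + t' (rsubmx x) in
      let G := comb (fun i : 'I_(R k'.+1) => liftL (G' (dP' (e i)))) in
      (G, fun b => b - iota k'.+1 (f k'.+1 (G b)) - sig (dP' b))
  end.

Definition G k := (data k).1.
Definition t k := (data k).2.
Arguments G k _ : clear implicits.
Arguments t k _ : clear implicits.
Definition dP k (x : 'rV[A]_(R k.+1)) : 'rV[A]_(R k) :=
  iota k (dQ k (lsubmx (x : 'rV[A]_(r k.+1 + R k)))) + t k (rsubmx (x : 'rV[A]_(r k.+1 + R k))).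

Arguments dP k _ : clear implicits.

Lemma G0E : G 0 = comb (fun i : 'I_(r 0) => liftA (augQ (e i))).
Proof. by []. Qed.
Lemma GSE k : G k.+1 = comb (fun i : 'I_(R k.+1) => liftL (G k (dP k (e i)))).
Proof. by []. Qed.
Lemma t0E b : t 0 b = b - f 0 (G 0 b).
Proof. by []. Qed.
Lemma tSE k b : t k.+1 b = b - iota k.+1 (f k.+1 (G k.+1 b)) - sig (dP k b).
Proof. by []. Qed.


Definition linQ m m' (h : 'rV[A]_m -> 'rV[A]_m') :=
  (forall u v, h (u + v) = h u + h v) /\ (forall a u, h (act a u) = act a (h u)).

Lemma comb_D j m (w : 'I_m -> L j) u v : comb w (u + v) = comb w u + comb w v.
Proof. by rewrite /comb -big_split; apply: eq_bigr => i _; rewrite mxE haLDl. Qed.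

Lemma comb_A j m (w : 'I_m -> L j) a v : comb w (act a v) = aL a (comb w v).
Proof.
rewrite /comb (addf_sum (haLD _ a)); apply: eq_bigr => i _.
by rewrite mxE haLmu.
Qed.

Lemma iota_lin k : linQ (iota k).
Proof.
case: k => [|k] /=; first by split.
split=> [u v|a u]; first by rewrite add_row_mx addr0.
by rewrite map_row_mx act0.
Qed.

Lemma sig_lin k : linQ (@sig k).
Proof.
split=> [u v|a u]; rewrite /sig; first by rewrite add_row_mx addr0.
by rewrite map_row_mx act0.
Qed.

Lemma lsub_D m1 m2 (u v : 'rV[A]_(m1 + m2)) : lsubmx (u + v) = lsubmx u + lsubmx v.
Proof. by apply/matrixP => i j; rewrite !mxE. Qed.
Lemma rsub_D m1 m2 (u v : 'rV[A]_(m1 + m2)) : rsubmx (u + v) = rsubmx u + rsubmx v.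
Proof. by apply/matrixP => i j; rewrite !mxE. Qed.

Lemma dP_lin_of k : (k < n)%N -> linQ (t k) -> linQ (dP k).
Proof.
move=> kn [tD tA]; have [iD iA] := iota_lin k.
split=> [u v|a u]; rewrite /dP.
  by rewrite lsub_D rsub_D hdQD // iD tD addrACA.
by rewrite -map_lsubmx -map_rsubmx hdQA // iA tA actD.
Qed.

Lemma t_lin k : (k <= n)%N -> linQ (t k).
Proof.
elim: k => [|k IH] kn.
  split=> [u v|a u]; rewrite !t0E G0E.
    by rewrite comb_D hfD // opprD addrACA.
  rewrite comb_A hfA //. 
  have -> : forall (x y : 'rV[A]_(r 0)), act a x - act a y = act a (x - y).
    by move=> x y; rewrite (addfB (@actD _ a)).
  by [].
have [dD dA] := dP_lin_of kn (IH (ltnW kn)).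
have [iD iA] := iota_lin k.+1; have [sD sA] := sig_lin k.
split=> [u v|a u]; rewrite !tSE GSE.
  rewrite comb_D hfD // iD dD sD.
  by rewrite arith3.
by rewrite comb_A hfA // iA dA sA !(addfB (@actD _ a)).
Qed.


Lemma G_lin k : (forall u v, G k (u + v) = G k u + G k v) /\
                (forall a u, G k (act a u) = aL a (G k u)).
Proof. by case: k => [|k]; split=> *; rewrite ?G0E ?GSE ?comb_D ?comb_A. Qed.

Lemma dP_iota k a : (k <= n)%N -> dP k (iota k.+1 a) = iota k (dQ k a).
Proof.
move=> kn; have [tD _] := t_lin kn.
by rewrite /dP /= row_mxKl row_mxKr (addf0 tD) addr0.
Qed.

Lemma dP_sig k c : (k < n)%N -> dP k (sig c) = t k c.
Proof.
move=> kn; have [iD _] := iota_lin k.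
by rewrite /dP /sig row_mxKl row_mxKr (addf0 (hdQD _ kn)) (addf0 iD) add0r.
Qed.

Lemma liftA_spec c : augL (liftA c) = c.
Proof. exact: (epsilon_spec (inhabits 0) (fun x => augL x = c) (haugLs c)). Qed.

Lemma Gc0 v : augL (G 0 v) = augQ v.
Proof.
rewrite G0E /comb (addf_sum haugLD).
rewrite [RHS](@lin_basis _ (fun a k => eps a * k) _ augQ haugQD haugQA).
by apply: eq_bigr => i _; rewrite haugLA liftA_spec.
Qed.

Lemma augQ_t0 b : augQ (t 0 b) = 0.
Proof. by rewrite t0E (addfB haugQD) hf0 Gc0 subrr. Qed.

Lemma augQ_dP0 x : (0 < n)%N -> augQ (dP 0 x) = 0.
Proof. by move=> n0; rewrite /dP /= haugQD hQ0 // augQ_t0 addr0. Qed.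

Lemma GcS_of k : (k < n)%N ->
  (forall i, exists y, dL k y = G k (dP k (e i))) ->
  forall v, dL k (G k.+1 v) = G k (dP k v).
Proof.
move=> kn hex v; have [GD GA] := G_lin k; have [dD dA] := dP_lin_of kn (t_lin (ltnW kn)).
rewrite GSE /comb (addf_sum (hdLD _ kn)).
rewrite [RHS](@lin_basis _ (@aL k) _ (fun v => G k (dP k v))); first last.
- by move=> a u; rewrite dA GA.
- by move=> u u'; rewrite dD GD.
apply: eq_bigr => i _; rewrite hdLA //; congr (aL _ _).
exact: (epsilon_spec (inhabits 0) (fun x => dL k x = _) (hex i)).
Qed.

Lemma dPE k x : dP k x = iota k (dQ k (lsubmx (x : 'rV[A]_(r k.+1 + R k)))) + t k (rsubmx (x : 'rV[A]_(r k.+1 + R k))).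
Proof. by []. Qed.

Lemma dPdP k : (k.+1 < n)%N ->
  (forall v, dL k (G k.+1 v) = G k (dP k v)) ->
  forall x, let c := dP k (rsubmx (x : 'rV[A]_(r k.+2 + R k.+1))) in
  dP k (dP k.+1 x) = c - iota k (f k (G k c)) - t k c.
Proof.
move=> n1 Gc x c.
have kn : (k < n)%N by apply: ltnW.
have [dD _] := dP_lin_of kn (t_lin (ltnW kn)).
have [iD _] := iota_lin k.
have kn' : (k <= n)%N by apply: ltnW.
rewrite (@dPE k.+1 x) dD dP_iota // (hQS k n1) (addf0 iD) add0r.
by rewrite tSE !(addfB dD) dP_iota // (hfS k kn) Gc dP_sig.
Qed.

Lemma main_ind k : (k < n)%N ->
  (forall v, dL k (G k.+1 v) = G k (dP k v)) /\
  ((k.+1 < n)%N -> forall x, dP k (dP k.+1 x) = 0).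
Proof.
elim: k => [|k IH] kn.
  have Gc1 : forall v, dL 0 (G 1 v) = G 0 (dP 0 v).
    apply: GcS_of => // i; apply/hex0 => //.
    by rewrite Gc0 augQ_dP0.
  split=> // n1 x.
  by rewrite (dPdP n1 Gc1) t0E /= subrr.
have [GcI CI] := IH (ltnW kn).
have CIk := CI kn.
have [GD _] := G_lin k.
have Gc : forall v, dL k.+1 (G k.+2 v) = G k.+1 (dP k.+1 v).
  apply: GcS_of => // i; apply/hexS => //.
  by rewrite GcI CIk (addf0 GD).
split=> // n1 x.
have [sD _] := sig_lin k.
rewrite (dPdP n1 Gc) tSE.
set c := dP k.+1 _.
have -> : dP k c = 0 by rewrite /c CIk.
by rewrite (addf0 sD) subr0 subrr.
Qed.


Lemma exact_at k (x : 'rV[A]_(R k)) : (k < n)%N ->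
  (exists y, dL k y = G k x) -> t k x = x - iota k (f k (G k x)) ->
  exists z, dP k z = x.
Proof.
move=> kn [y hy] ht.
have [dD _] := dP_lin_of kn (t_lin (ltnW kn)).
exists (sig x + iota k.+1 (f k.+1 y)).
rewrite dD dP_sig // dP_iota ?(ltnW kn) // hfS // hy ht.
by rewrite subrK.
Qed.

Theorem generic_FP :
  K_FP (fun m a (v : 'rV[A]_m) => map_mx (mu a) v) (fun a k => eps a * k) n.
Proof.
exists R, dP, augQ; split.
- by split.
- by move=> j jn; apply: dP_lin_of => //; apply: t_lin; apply: ltnW.
- by move=> k; have [y hy] := haugLs k; exists (f 0 y); rewrite hf0.
- move=> n0 x; split; last by move=> [y <-]; apply: augQ_dP0.
  move=> hx; apply: exact_at => //.
  by apply/hex0 => //; rewrite Gc0.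
- move=> j j1 x; split; last by move=> [y <-]; apply: (main_ind (ltnW j1)).2.
  move=> hx; apply: exact_at => //.
    apply/hexS => //; rewrite (main_ind (ltnW j1)).1 hx.
    by have [GD _] := G_lin j; rewrite (addf0 GD).
  have [sD _] := sig_lin j.
  by rewrite tSE hx (addf0 sD) subr0.
Qed.

End Generic.


Section BimodFacts.
Variables (K : comPzRingType) (A : algType K).
Implicit Types (M : bimod A).

Lemma bl_D M a (m m' : M) : bl a (m + m') = bl a m + bl a m'.
Proof. by case: M m m' => ? ? ? *; auto. Qed.
Lemma bl_Dl M a a' (m : M) : bl (a + a') m = bl a m + bl a' m.
Proof. by case: M m => ? ? ? *; auto. Qed.
Lemma bl_M M a b (m : M) : bl (a * b) m = bl a (bl b m).
Proof. by case: M m => ? ? ? *; auto. Qed.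
Lemma br_D M a (m m' : M) : br (m + m') a = br m a + br m' a.
Proof. by case: M m m' => ? ? ? *; auto. Qed.
Lemma br_Dl M a a' (m : M) : br m (a + a') = br m a + br m a'.
Proof. by case: M m => ? ? ? *; auto. Qed.
Lemma br_M M a b (m : M) : br m (a * b) = br (br m a) b.
Proof. by case: M m => ? ? ? *; auto. Qed.

Lemma bimod_hom_comp M1 M2 M3 (h1 : M1 -> M2) (h2 : M2 -> M3) :
  bimod_hom h1 -> bimod_hom h2 -> bimod_hom (fun x => h2 (h1 x)).
Proof.
case=> a1 l1 r1 [a2 l2 r2]; split=> *; by rewrite ?a1 ?a2 ?l1 ?l2 ?r1 ?r2.
Qed.
End BimodFacts.

Section Side.
Variables (K : comPzRingType) (A : algType K) (eps : A -> K).
Hypothesis haug : augmentation eps.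
Variable side : bool.

Lemma epsD x y : eps (x + y) = eps x + eps y. Proof. by case: haug. Qed.
Lemma epsM x y : eps (x * y) = eps x * eps y. Proof. by case: haug. Qed.
Lemma eps1 : eps 1 = 1. Proof. by case: haug. Qed.
Lemma epsZ k x : eps (k *: x) = k * eps x. Proof. by case: haug. Qed.
Lemma eps0 : eps 0 = 0. Proof. exact: addf0 epsD. Qed.
Lemma epsk k : eps k%:A = k. Proof. by rewrite epsZ eps1 mulr1. Qed.

Definition mu (a x : A) : A := if side then a * x else x * a.
Definition alpha (a : A) : A := if side then a else (eps a)%:A.
Definition beta (a : A) : A := if side then (eps a)%:A else a.
Definition bact (M : bimod A) (a : A) (m : M) : M := if side then bl a m else br m a.

Lemma alg_central k (x : A) : k%:A * x = x * k%:A.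
Proof. by rewrite mulr_algl mulr_algr. Qed.

Lemma alphaD a b : alpha (a + b) = alpha a + alpha b.
Proof. by rewrite /alpha; case: side => //; rewrite epsD scalerDl. Qed.
Lemma betaD a b : beta (a + b) = beta a + beta b.
Proof. by rewrite /beta; case: side => //; rewrite epsD scalerDl. Qed.
Lemma alpha1 : alpha 1 = 1.
Proof. by rewrite /alpha; case: side => //; rewrite eps1 scale1r. Qed.
Lemma beta1 : beta 1 = 1.
Proof. by rewrite /beta; case: side => //; rewrite eps1 scale1r. Qed.
Lemma algM (k l : K) : (k * l)%:A = k%:A * l%:A :> A.
Proof. by rewrite mulr_algl scalerA. Qed.
Lemma alphaM a b : alpha (a * b) = alpha a * alpha b.
Proof. by rewrite /alpha; case: side => //; rewrite epsM algM. Qed.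
Lemma betaM a b : beta (a * b) = beta a * beta b.
Proof. by rewrite /beta; case: side => //; rewrite epsM algM. Qed.
Lemma alphak k : alpha k%:A = k%:A.
Proof. by rewrite /alpha; case: side => //; rewrite epsk. Qed.
Lemma betak k : beta k%:A = k%:A.
Proof. by rewrite /beta; case: side => //; rewrite epsk. Qed.
Lemma eps_alpha a : eps (alpha a) = eps a.
Proof. by rewrite /alpha; case: side => //; rewrite epsk. Qed.
Lemma eps_beta a : eps (beta a) = eps a.
Proof. by rewrite /beta; case: side => //; rewrite epsk. Qed.

Definition Bbl m (a : A) (v : 'rV[A]_m) : 'rV[A]_m := map_mx (fun x => alpha a * x) v.
Definition Bbr m (v : 'rV[A]_m) (a : A) : 'rV[A]_m := map_mx (fun x => x * beta a) v.

Definition B (m : nat) : bimod A.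
Proof.
refine (@Bimod K A 'rV[A]_m (@Bbl m) (@Bbr m) _ _ _ _ _ _ _ _ _ _);
  move=> *; apply/matrixP => i j; rewrite !mxE.
- by rewrite mulrDr.
- by rewrite alphaD mulrDl.
- by rewrite alpha1 mul1r.
- by rewrite alphaM mulrA.
- by rewrite mulrDl.
- by rewrite betaD mulrDr.
- by rewrite beta1 mulr1.
- by rewrite betaM mulrA.
- by rewrite mulrA.
- by rewrite alphak betak alg_central.
Defined.

Definition Kb : bimod A.
Proof.
refine (@Bimod K A K (fun a k => eps a * k) (fun k a => k * eps a) _ _ _ _ _ _ _ _ _ _);
  move=> *.
- by rewrite mulrDr.
- by rewrite epsD mulrDl.
- by rewrite eps1 mul1r.
- by rewrite epsM mulrA.
- by rewrite mulrDl.
- by rewrite epsD mulrDr.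
- by rewrite eps1 mulr1.
- by rewrite epsM mulrA.
- by rewrite mulrA.
- by rewrite mulrC.
Defined.


Lemma mu1 x : mu x 1 = x. Proof. by rewrite /mu; case: side; rewrite ?mulr1 ?mul1r. Qed.
Lemma mu0 x : mu x 0 = 0. Proof. by rewrite /mu; case: side; rewrite ?mulr0 ?mul0r. Qed.
Lemma mu1l x : mu 1 x = x. Proof. by rewrite /mu; case: side; rewrite ?mulr1 ?mul1r. Qed.
Lemma mu0l x : mu 0 x = 0. Proof. by rewrite /mu; case: side; rewrite ?mulr0 ?mul0r. Qed.
Lemma muD a x y : mu a (x + y) = mu a x + mu a y.
Proof. by rewrite /mu; case: side; rewrite ?mulrDr ?mulrDl. Qed.
Lemma muDl x y z : mu (x + y) z = mu x z + mu y z.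
Proof. by rewrite /mu; case: side; rewrite ?mulrDr ?mulrDl. Qed.
Lemma mu_mu a y x : mu (mu a y) x = mu a (mu y x).
Proof. by rewrite /mu; case: side; rewrite mulrA. Qed.
Lemma eps_mu a y : eps (mu a y) = eps a * eps y.
Proof. by rewrite /mu; case: side; rewrite epsM // mulrC. Qed.
Lemma mu_alpha a y x : mu (alpha a * y) x = alpha a * mu y x.
Proof.
rewrite /mu /alpha; case: side; first by rewrite mulrA.
by rewrite !mulrA alg_central.
Qed.
Lemma mu_beta a y x : mu (y * beta a) x = mu y x * beta a.
Proof.
rewrite /mu /beta; case: side; last by rewrite mulrA.
by rewrite -!mulrA alg_central.
Qed.

Lemma bactD (M : bimod A) a (x y : M) : bact a (x + y) = bact a x + bact a y.
Proof. by rewrite /bact; case: side; rewrite ?bl_D ?br_D. Qed.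
Lemma bactDl (M : bimod A) a b (x : M) : bact (a + b) x = bact a x + bact b x.
Proof. by rewrite /bact; case: side; rewrite ?bl_Dl ?br_Dl. Qed.
Lemma bact_mu (M : bimod A) a b (x : M) : bact (mu a b) x = bact a (bact b x).
Proof. by rewrite /bact /mu; case: side; rewrite ?bl_M ?br_M. Qed.
Lemma bact_hom (M N : bimod A) (h : M -> N) : bimod_hom h ->
  forall a x, h (bact a x) = bact a (h x).
Proof. by case=> _ hl hr a x; rewrite /bact; case: side. Qed.
Lemma bactB m a (v : B m) : bact a v = map_mx (mu a) v :> 'rV[A]_m.
Proof. by rewrite /bact /mu /= /Bbl /Bbr /alpha /beta; case: side. Qed.
Lemma aug_bact (F : bimod A) (aug : F -> K) : aug_bimod_hom eps aug ->
  forall a x, aug (bact a x) = eps a * aug x.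
Proof. by case=> _ hl hr a x; rewrite /bact; case: side; rewrite ?hl ?hr // mulrC. Qed.

End Side.


Section SideFP.
Variables (K : comPzRingType) (A : algType K) (eps : A -> K).
Hypothesis haug : augmentation eps.
Variable side : bool.

Local Notation mu := (mu side).
Local Notation bact := (bact side).
Local Notation B := (B haug side).
Local Notation Kb := (Kb haug).
Local Notation act a v := (map_mx (mu a) v).

Lemma actD' m a (u v : 'rV[A]_m) : act a (u + v) = act a u + act a v.
Proof. by apply/matrixP => i j; rewrite !mxE muD. Qed.

Lemma mapD (g : A -> A) : (forall x y, g (x + y) = g x + g y) ->
  forall m (u v : 'rV[A]_m), map_mx g (u + v) = map_mx g u + map_mx g v.
Proof. by move=> gD m u v; apply/matrixP => i j; rewrite !mxE gD. Qed.

Lemma map0 (g : A -> A) : g 0 = 0 -> forall m, map_mx g (0 : 'rV[A]_m) = 0.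
Proof. by move=> g0 m; apply/matrixP => i j; rewrite !mxE g0. Qed.

Lemma e_entry m (i l : 'I_m) : (e A i) 0 l = (i == l)%:R.
Proof. by rewrite /e mxE eqxx eq_sym. Qed.

Lemma side_FP n : weak_biFP eps n ->
  K_FP (fun m a (v : 'rV[A]_m) => act a v) (fun a k => eps a * k) n.
Proof.
case=> F [r [d [aug [hfree [haugh hd hsurj hex0 hexS]]]]].
pose univ j (g : 'I_(r j) -> F j) :=
  forall (M : bimod A) (m : 'I_(r j) -> M),
      (exists h : F j -> M, bimod_hom h /\ forall i, h (g i) = m i) /\
      (forall h h' : F j -> M, bimod_hom h -> bimod_hom h' ->
         (forall i, h (g i) = h' (g i)) -> forall x, h x = h' x).
pose gb j := epsilon (inhabits (fun _ => 0)) (univ j).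
have hgb : forall j, (j <= n)%N -> univ j (gb j).
  by move=> j jn; exact: (epsilon_spec (inhabits _) (univ j) (hfree j jn)).
pose pi j := epsilon (inhabits (fun _ : F j => (0 : 'rV[A]_(r j))))
  (fun p : F j -> 'rV[A]_(r j) =>
     @bimod_hom K A (F j) (B (r j)) p /\ forall i, p (gb j i) = e A i).
have hpi : forall j, (j <= n)%N ->
    @bimod_hom K A (F j) (B (r j)) (pi j) /\ forall i, pi j (gb j i) = e A i.
  move=> j jn.
  exact: (epsilon_spec (inhabits _) _ ((hgb j jn) (B (r j)) (fun i => e A i)).1).
pose dQ j (v : 'rV[A]_(r j.+1)) : 'rV[A]_(r j) :=
  \sum_i act (v 0 i) (pi j (d j (gb j.+1 i))).
pose augQ (v : 'rV[A]_(r 0)) : K := \sum_i eps (v 0 i) * aug (gb 0 i).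
have dQD : forall j u v, dQ j (u + v) = dQ j u + dQ j v.
  move=> j u v; rewrite /dQ -big_split; apply: eq_bigr => i _ /=.
  by apply/matrixP => a b; rewrite !mxE muDl.
have dQA : forall j a u, dQ j (act a u) = act a (dQ j u).
  move=> j a u; rewrite /dQ (addf_sum (@actD' _ a)); apply: eq_bigr => i _.
  by apply/matrixP => x y; rewrite !mxE mu_mu.
have dQe : forall j i, dQ j (e A i) = pi j (d j (gb j.+1 i)).
  move=> j i; rewrite /dQ (bigD1 i) //= e_entry eqxx big1 ?addr0.
    by apply/matrixP => x y; rewrite !mxE mulr1n mu1l.
  move=> l /negbTE hl; rewrite e_entry eq_sym hl mulr0n.
  by apply/matrixP => x y; rewrite !mxE mu0l.
have dQhom : forall j, @bimod_hom K A (B (r j.+1)) (B (r j)) (dQ j).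
  move=> j; split => [u v|a v|a v]; first exact: dQD.
    rewrite /= /Bbl /dQ (addf_sum (@mapD (fun z => alpha eps side a * z) (fun x y => mulrDr _ x y) (r j))).
    by apply: eq_bigr => i _; apply/matrixP => x y; rewrite !mxE mu_alpha.
  rewrite /= /Bbr /dQ (addf_sum (@mapD (fun z => z * beta eps side a) (fun x y => mulrDl x y _) (r j))).
  by apply: eq_bigr => i _; apply/matrixP => x y; rewrite !mxE mu_beta.
have chain : forall j, (j < n)%N -> forall x, dQ j (pi j.+1 x) = pi j (d j x).
  move=> j jn x; have [h1 h1e] := hpi j.+1 jn; have [h0 h0e] := hpi j (ltnW jn).
  have H1 := bimod_hom_comp h1 (dQhom j).
  have H2 := bimod_hom_comp (hd j jn) h0.
  have H3 : forall i, dQ j (pi j.+1 (gb j.+1 i)) = pi j (d j (gb j.+1 i)).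
    by move=> i; rewrite h1e dQe.
  exact: (((hgb j.+1 jn) (B (r j)) (fun _ => 0)).2 _ _ H1 H2 H3 x).
have augQD : forall u v, augQ (u + v) = augQ u + augQ v.
  move=> u v; rewrite /augQ -big_split; apply: eq_bigr => i _.
  by rewrite mxE (epsD haug) mulrDl.
have augQA : forall a u, augQ (act a u) = eps a * augQ u.
  move=> a u; rewrite /augQ mulr_sumr; apply: eq_bigr => i _.
  by rewrite mxE (eps_mu haug) mulrA.
have augQe : forall i, augQ (e A i) = aug (gb 0 i).
  move=> i; rewrite /augQ (bigD1 i) //= e_entry eqxx big1 ?addr0.
    by rewrite mulr1n (eps1 haug) mul1r.
  by move=> l /negbTE hl; rewrite e_entry eq_sym hl mulr0n (eps0 haug) mul0r.
have augQhom : @bimod_hom K A (B (r 0)) Kb augQ.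
  split => [u v|a v|a v]; first exact: augQD.
    rewrite /= /Bbl /augQ mulr_sumr; apply: eq_bigr => i _.
    by rewrite mxE (epsM haug) eps_alpha // mulrA.
  rewrite /= /Bbr /augQ mulr_suml; apply: eq_bigr => i _.
  by rewrite mxE (epsM haug) eps_beta // mulrAC.
have chain0 : forall x, augQ (pi 0 x) = aug x.
  move=> x; have [h0 h0e] := hpi 0 (leq0n n).
  have H1 := bimod_hom_comp h0 augQhom.
  have H2 : @bimod_hom K A (F 0) Kb aug by exact: haugh.
  have H3 : forall i, augQ (pi 0 (gb 0 i)) = aug (gb 0 i).
    by move=> i; rewrite h0e augQe.
  exact: (((hgb 0 (leq0n n)) Kb (fun i => aug (gb 0 i))).2 _ _ H1 H2 H3 x).
have hQ0 : (0 < n)%N -> forall y, augQ (dQ 0 y) = 0.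
  move=> n0 y.
  rewrite (@lin_basis _ _ mu (mu1 side) (mu0 side) _ (fun a k => eps a * k) _
             (fun v => augQ (dQ 0 v))); first last.
  - by move=> a v; rewrite dQA augQA.
  - by move=> u v; rewrite dQD augQD.
  rewrite big1 // => i _; rewrite dQe chain0.
  have -> : aug (d 0 (gb 1 i)) = 0 by apply/(hex0 n0); exists (gb 1 i).
  by rewrite mulr0.
have hQS : forall j, (j.+1 < n)%N -> forall y, dQ j (dQ j.+1 y) = 0.
  move=> j j1 y.
  rewrite (@lin_basis _ _ mu (mu1 side) (mu0 side) _ (fun a v => act a v) _
             (fun v => dQ j (dQ j.+1 v))); first last.
  - by move=> a v; rewrite !dQA.
  - by move=> u v; rewrite !dQD.
  rewrite big1 // => i _; rewrite dQe (chain j (ltnW j1)).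
  have -> : d j (d j.+1 (gb j.+2 i)) = 0 by apply/(hexS j j1); exists (gb j.+2 i).
  have [[hpD _ _] _] := hpi j (ltnW (ltnW j1)).
  by rewrite (addf0 hpD) map0 // mu0.
have HG := (@generic_FP K A eps mu (mu1 side) (mu0 side) (muD side) n
          (fun j => F j) (fun j => @Submission.bact K A side (F j)) d aug
          _ _ _ _ _ _ _ _ _ _ r dQ augQ pi).
apply: HG.
- by move=> *; apply: bactD.
- by move=> *; apply: bactDl.
- by move=> *; apply: bact_mu.
- by move=> j jn; case: (hd j jn).
- by move=> j jn a x; apply: bact_hom (hd j jn) a x.
- by case: haugh.
- exact: aug_bact haugh.
- exact: hsurj.
- exact: hex0.
- exact: hexS.
- by move=> *; apply: dQD.
- by move=> *; apply: dQA.
- exact: augQD.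
- exact: augQA.
- by move=> j jn; case: (hpi j jn) => -[].
- by move=> j jn a x; rewrite (bact_hom _ (hpi j jn).1) bactB.
- exact: chain0.
- exact: chain.
- exact: hQ0.
- exact: hQS.
Qed.

End SideFP.

Lemma K_FP_ext (K : comPzRingType) (A : algType K)
  (act1 act2 : forall r : nat, A -> 'rV[A]_r -> 'rV[A]_r) (kact1 kact2 : A -> K -> K) n :
  (forall r a v, act1 r a v = act2 r a v) -> (forall a k, kact1 a k = kact2 a k) ->
  K_FP act1 kact1 n -> K_FP act2 kact2 n.
Proof.
move=> ha hk [r [d [aug [[augD augA] hd hs h0 hS]]]]; exists r, d, aug; split => //.
- by split => // a u; rewrite -ha -hk augA.
- by move=> j jn; have [dD dA] := hd j jn; split => // a u; rewrite -!ha dA.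
Qed.

Theorem mainTheorem4 (K : comPzRingType) (A : algType K) (eps : A -> K)
  (n : nat) :
  augmentation eps -> weak_biFP eps n -> left_FP eps n /\ right_FP eps n.
Proof.
move=> haug hw; split.
- apply: (K_FP_ext _ _ (side_FP haug true hw)) => //.
  by move=> m a v; rewrite /lact; apply/matrixP => i j; rewrite !mxE.
- apply: (K_FP_ext _ _ (side_FP haug false hw)) => //.
  by move=> a k; rewrite mulrC.
Qed.
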